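(* Let $\vec\sigma$ be any preference profile over $m$ alternatives with $n$ agents, and $d$ any pseudometric consistent with $\vec\sigma$. Let $\tau<1/m$ and let $\mathcal A'\subseteq\mathcal A$ be the set of alternatives with plurality score at least $\tau n$. Then $$\frac{\min_{X\in\mathcal A'}\mathrm{SC}(X,d)}{\min_{X\in\mathcal A}\mathrm{SC}(X,d)}\le 1+\frac{2}{1-\tau m}.$$ Consequently, if $f$ is a deterministic voting rule with metric distortion at most $D$, then the alternative $f(\vec\sigma')$, where $\vec\sigma'$ is $\vec\sigma$ restricted to $\mathcal A'$, satisfies $\mathrm{SC}(f(\vec\sigma'),d)\le D\left(1+\frac{2}{1-\tau m}\right)\min_{X\in\mathcal A}\mathrm{SC}(X,d)$.
   Context: Setting: $\mathcal N$ is a set of $n$ agents and $\mathcal A$ a set of $m$ alternatives. Each agent $i$ has a strict ranking $\sigma_i$ of $\mathcal A$; $X\succ_i Y$ means $i$ ranks $X$ above $Y$. The plurality score of $X$ is the number of agents ranking $X$ first. Restricting $\vec\sigma$ to $\mathcal A'$ means each agent's ranking is restricted to $\mathcal A'$ (relative order preserved). Metric framework: $d:(\mathcal N\cup\mathcal A)^2\to\mathbb R_{\ge0}$ is a pseudometric ($d(a,a)=0$, symmetric, triangle inequality). $d$ is consistent with $\vec\sigma$ if $X\succ_i Y\Rightarrow d(i,X)\le d(i,Y)$ for all $i,X,Y$. $\mathrm{SC}(X,d)=\sum_{i\in\mathcal N}d(i,X)$. The metric distortion of a distribution $p$ on $d$ is $\mathbb E_{X\sim p}[\mathrm{SC}(X,d)]/\min_X\mathrm{SC}(X,d)$;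 the metric distortion of a rule $f$ is the supremum of this quantity for $p=f(\vec\sigma)$ over all profiles $\vec\sigma$ (any $n$, any alternative set) and all pseudometrics $d$ consistent with $\vec\sigma$. *)

(* Defs.v *)
From HB Require Import structures.
From mathcomp Require Import all_boot all_order all_algebra.
From mathcomp Require Import reals.
Set Implicit Arguments. Unset Strict Implicit. Unset Printing Implicit Defensive.
Import Order.TTheory GRing.Theory Num.Theory.
Local Open Scope ring_scope.

(* A profile of n agents over the finite set of alternatives A: agent i's
   ranking is the sequence σ i, best alternative first. *)
Definition profile (A : finType) (n : nat) := 'I_n -> seq A.

Definition is_profile (A : finType) (n : nat) (σ : profile A n) : Prop :=
  forall i : 'I_n, perm_eq (σ i) (enum A).

Definition prefers (A : finType) (n : nat) (σ : profile A n) (i : 'I_n) (X Y : A) : bool :=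
  (index X (σ i) < index Y (σ i))%N.

Definition plurality (A : finType) (n : nat) (σ : profile A n) (X : A) : nat :=
  #|[set i : 'I_n | ohead (σ i) == Some X]|.

(* pseudometric on a type (here N ∪ A = 'I_n + A), values in R_{>=0} *)
Definition pseudometric (R : realType) (T : Type) (d : T -> T -> R) : Prop :=
  [/\ forall x y, 0 <= d x y,
      forall x, d x x = 0,
      forall x y, d x y = d y x
    & forall x y z, d x z <= d x y + d y z].

Definition consistent (R : realType) (A : finType) (n : nat) (σ : profile A n)
  (d : 'I_n + A -> 'I_n + A -> R) : Prop :=
  forall (i : 'I_n) (X Y : A), prefers σ i X Y -> d (inl i) (inr X) <= d (inl i) (inr Y).

Definition SC (R : realType) (A : finType) (n : nat) (d : 'I_n + A -> 'I_n + A -> R)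
  (X : A) : R := \sum_(i < n) d (inl i) (inr X).

Definition alts_in (A : finType) (S : {set A}) : finType := {x : A | x \in S}.

Definition restrict (A : finType) (n : nat) (σ : profile A n) (S : {set A}) :
  profile (alts_in S) n := fun i => pmap (insub : A -> option (alts_in S)) (σ i).

Definition voting_rule :=
  forall (A : finType) (n : nat), (0 < #|A|)%N -> profile A n -> A.

Definition distortion_at_most (R : realType) (f : voting_rule) (D : R) : Prop :=
  forall (A : finType) (n : nat) (HA : (0 < #|A|)%N) (σ : profile A n),
    is_profile σ ->
    forall d : 'I_n + A -> 'I_n + A -> R, pseudometric d -> consistent σ d ->
    forall Y : A, SC d (f A n HA σ) <= D * SC d Y.

(* Main.v *)
Require Import Defs.
From HB Require Import structures.
From mathcomp Require Import all_boot all_order all_algebra.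
From mathcomp Require Import reals.
From mathcomp Require Import lra.
Import Order.TTheory GRing.Theory Num.Theory.
Local Open Scope ring_scope.

Lemma top_best (R : realType) (A : finType) (n : nat) (σ : profile A n)
  (d : 'I_n + A -> 'I_n + A -> R) (x0 : A) :
  is_profile σ -> consistent σ d ->
  forall i Y, d (inl i) (inr (head x0 (σ i))) <= d (inl i) (inr Y).
Proof.
move=> Hp Hc i Y.
have Hsz : size (σ i) = #|A| by rewrite (perm_size (Hp i)) -cardE.
have HA : (0 < #|A|)%N by apply/card_gt0P; exists Y.
case Es: (σ i) => [|x s] /=.
  by move: Hsz HA; rewrite Es /= => <-.
case: (eqVneq x Y) => [<-|ne]; first by [].
apply: Hc; rewrite /prefers Es /= eqxx (negbTE ne) //.
Qed.

Lemma plur_top (A : finType) (n : nat) (σ : profile A n) (x0 : A) X :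
  is_profile σ -> plurality σ X = #|[set i | head x0 (σ i) == X]|.
Proof.
move=> Hp; rewrite /plurality; apply: eq_card => i; rewrite !inE.
have Hsz : size (σ i) = #|A| by rewrite (perm_size (Hp i)) -cardE.
have HA : (0 < #|A|)%N by apply/card_gt0P; exists x0.
case Es: (σ i) => [|x s] /=; first by move: Hsz HA; rewrite Es /= => <-.
by apply/eqP/eqP => [[]|->].
Qed.

Lemma card_part (A : finType) (n : nat) (top : 'I_n -> A) (P : pred A) :
  #|[set i | P (top i)]| = (\sum_(X | P X) #|[set i | top i == X]|)%N.
Proof.
rewrite -sum1_card.
rewrite (eq_bigl (fun i => P (top i))); last by move=> i; rewrite inE.
rewrite (partition_big top P) //=.
apply: eq_bigr => X PX; rewrite -(sum1_card (mem [set i | top i == X])); apply: eq_bigl => i.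
rewrite !inE; case: (eqVneq (top i) X) => [->|]; by rewrite ?PX ?andbF ?andbT.
Qed.

Lemma part1 (R : realType) (A : finType) (n : nat) (σ : profile A n)
  (d : 'I_n + A -> 'I_n + A -> R) (τ : R) :
  (0 < #|A|)%N -> is_profile σ -> pseudometric d -> consistent σ d ->
  τ < (#|A|%:R)^-1 ->
  exists2 X : A, X \in [set X : A | τ * n%:R <= (plurality σ X)%:R] &
    forall Y : A, SC d X <= (1 + 2 / (1 - τ * #|A|%:R)) * SC d Y.
Proof.
move=> HA Hp [d0 dxx dsym dtri] Hc Hτ.
set A' := [set X : A | _].
set m := #|A|.
have mpos : 0 < m%:R :> R by rewrite ltr0n.
have cpos : 0 < 1 - τ * m%:R.
  by rewrite subr_gt0 -ltr_pdivlMr // div1r.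
set c := 1 - τ * m%:R.
have b1 : 1 <= 1 + 2 / c by rewrite lerDl divr_ge0 // ltW.
have SC0 : forall X, 0 <= SC d X by move=> X; apply: sumr_ge0 => i _; apply: d0.
case/card_gt0P: HA => x0 _.
set O := [arg min_(X < x0) SC d X]%O.
have Omin : forall Y, SC d O <= SC d Y.
  by rewrite /O; case: arg_minP => // Z _ HZ Y; apply: HZ.
case: (boolP (O \in A')) => OA'.
  by exists O => // Y; apply: le_trans (Omin Y) _; apply: ler_peMl.
have Hτn : 0 < τ * n%:R.
  move: OA'; rewrite inE -ltNge => H; apply: le_lt_trans H; exact: ler0n.
pose top := fun i => head x0 (σ i).
set S := [set i | top i \in A'].
have Hcount : n%:R * c <= #|S|%:R.
  have E : (n = #|S| + #|[set i | top i \in ~: A']|)%N.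
    rewrite -{1}(card_ord n) -(cardsC S); congr (_ + _)%N.
    by apply: eq_card => i; rewrite !inE.
  have E2 : (#|[set i | top i \in ~: A']| = \sum_(X | X \in ~: A') plurality σ X)%N.
    rewrite (@card_part _ _ top (fun X => X \in ~: A')).
    by apply: eq_bigr => X _; rewrite (@plur_top _ _ σ x0 X Hp).
  have E3 : ((\sum_(X | X \in ~: A') (plurality σ X))%:R <= m%:R * (τ * n%:R) :> R).
    rewrite natr_sum.
    apply: le_trans (_ : \sum_(X | X \in ~:A') τ * n%:R <= _).
      by apply: ler_sum => X; rewrite !inE -ltNge => /ltW.
    rewrite sumr_const -[X in X <= _]mulr_natl; apply: ler_wpM2r; first exact: ltW.
    by rewrite ler_nat; exact: max_card.
  have : n%:R <= #|S|%:R + m%:R * (τ * n%:R) :> R.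
    by rewrite {1}E natrD E2 lerD2l.
  rewrite /c; nra.
have npos : 0 < n%:R :> R.
  rewrite ltr0n lt0n; apply/negP => /eqP n0; move: Hτn; rewrite n0 mulr0 ltxx //.
have Spos : (0 < #|S|)%N.
  by rewrite -(ltr0n R); apply: lt_le_trans Hcount; rewrite mulr_gt0.
case/card_gt0P: Spos => i1 Hi1.
set i0 := [arg min_(i < i1 | i \in S) d (inl i) (inr O)]%O.
have [Hi0 Hmin] : i0 \in S /\ forall i, i \in S -> d (inl i0) (inr O) <= d (inl i) (inr O).
  by rewrite /i0; case: arg_minP => // j Hj H; split=> // i; exact: H.
set e := d (inl i0) (inr O).
have He : #|S|%:R * e <= SC d O.
  rewrite mulr_natl -sumr_const.
  apply: le_trans (_ : \sum_(i in S) d (inl i) (inr O) <= _).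
    by apply: ler_sum => i; apply Hmin.
  rewrite /SC [X in _ <= X](bigID (mem S)) /=.
  rewrite -[X in X <= _]addr0; apply: lerD; first by [].
  by apply: sumr_ge0 => i _; apply: d0.
have XA' : top i0 \in A' by move: Hi0; rewrite inE.
exists (top i0) => // Y.
have dOX : d (inr O) (inr (top i0)) <= 2 * e.
  apply: le_trans (dtri _ (inl i0) _) _.
  have h := @top_best R A n σ d x0 Hp Hc i0 O.
  rewrite (dsym (inr O)) /e; rewrite /top in h |- *; lra.
have HSCX : SC d (top i0) <= SC d O + n%:R * d (inr O) (inr (top i0)).
  rewrite /SC.
  apply: le_trans (_ : \sum_(i < n) (d (inl i) (inr O) + d (inr O) (inr (top i0))) <= _).
    by apply: ler_sum => i _; apply: dtri.
  by rewrite big_split /= lerD2l sumr_const card_ord mulr_natl.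
have key : n%:R * e <= SC d O / c.
  rewrite ler_pdivlMr //; apply: le_trans He.
  rewrite mulrAC; apply: ler_wpM2r => //; exact: d0.
apply: le_trans HSCX _.
apply: le_trans (_ : SC d O + 2 * (SC d O / c) <= _).
  have := ler_wpM2l (ler0n R n) dOX; lra.
have -> : 2 * (SC d O / c) = 2 / c * SC d O by rewrite mulrA mulrAC.
rewrite -[X in X + _]mul1r -mulrDl.
apply: ler_wpM2l; [apply: le_trans b1; exact: ler01 | exact: Omin].
Qed.
Lemma index_pmap (A : finType) (S : {set A}) (s : seq A) (X Y : alts_in S) :
  (index X (pmap (insub : A -> option (alts_in S)) s) <
   index Y (pmap (insub : A -> option (alts_in S)) s))%N ->
  (index (val X) s < index (val Y) s)%N.
Proof.
elim: s => [//|x s IH] /=.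
case: insubP => [z xS vz|xnS] /=.
  rewrite -vz !(inj_eq val_inj).
  by case: eqP; case: eqP => //= _ _; exact: IH.
have hX : (x == val X) = false.
  by apply/negbTE; apply: contraNneq xnS => ->; exact: valP.
have hY : (x == val Y) = false.
  by apply/negbTE; apply: contraNneq xnS => ->; exact: valP.
by rewrite hX hY ltnS; exact: IH.
Qed.

Lemma D_nonneg (R : realType) (B : finType) (f : voting_rule) (D : R)
  (HB : (0 < #|B|)%N) : distortion_at_most f D -> 0 <= D.
Proof.
move=> Hf.
case/card_gt0P: HB (HB) => b _ HB.
pose d1 : 'I_1 + B -> 'I_1 + B -> R := fun x y => if x == y then 0 else 1.
pose σ1 : profile B 1 := fun _ => enum B.
have Hp1 : is_profile σ1 by move=> i; exact: perm_refl.
have Hd1 : pseudometric d1.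
  split.
  - by move=> x y; rewrite /d1; case: ifP.
  - by move=> x; rewrite /d1 eqxx.
  - by move=> x y; rewrite /d1 eq_sym.
  - move=> x y z; rewrite /d1.
    case: (eqVneq x z) => [_|xz]; first by apply: addr_ge0; case: ifP.
    case: (eqVneq x y) => [xy|_]; last by case: ifP => _; lra.
    by rewrite -xy (negbTE xz) add0r.
have Hc1 : consistent σ1 d1 by move=> i U V _; rewrite /d1.
have := Hf B 1 HB σ1 Hp1 d1 Hd1 Hc1 b.
rewrite /SC !big_ord1 /d1 /=; lra.
Qed.

Theorem mainTheorem2 (R : realType) (A : finType) (n : nat) (σ : profile A n)
  (d : 'I_n + A -> 'I_n + A -> R) (τ : R) :
  (0 < #|A|)%N -> is_profile σ -> pseudometric d -> consistent σ d ->
  τ < (#|A|%:R)^-1 ->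
  let A' := [set X : A | τ * n%:R <= (plurality σ X)%:R] in
  let bound := 1 + 2 / (1 - τ * #|A|%:R) in
  (* min_{X in A'} SC(X,d) <= bound * min_{X in A} SC(X,d) *)
  (exists2 X : A, X \in A' & forall Y : A, SC d X <= bound * SC d Y) /\
  (forall (f : voting_rule) (D : R), distortion_at_most f D ->
     (0 < #|alts_in A'|)%N /\
     forall (HA' : (0 < #|alts_in A'|)%N) (Y : A),
       SC d (val (f (alts_in A') n HA' (restrict σ A'))) <= D * bound * SC d Y).
Proof.
move=> HA Hp Hd Hc Hτ A' bound.
have [X XA' HX] := @part1 R A n σ d τ HA Hp Hd Hc Hτ.
split; first by exists X.
move=> f D Hf.
have HA'0 : (0 < #|alts_in A'|)%N.
  by apply/card_gt0P; exists (exist (fun x => x \in A') X XA').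
split => // HA' Y.
pose Xs : alts_in A' := exist (fun x => x \in A') X XA'.
pose g : 'I_n + alts_in A' -> 'I_n + A :=
  fun z => match z with inl i => inl i | inr x => inr (val x) end.
pose d' := fun x y => d (g x) (g y).
have Hp' : is_profile (restrict σ A').
  move=> i; apply: uniq_perm.
  - apply: (pmap_uniq (g := val)); first exact: insubK.
    by rewrite (perm_uniq (Hp i)) enum_uniq.
  - exact: enum_uniq.
  - by move=> z; rewrite mem_enum mem_pmap_sub (perm_mem (Hp i)) mem_enum.
have Hd' : pseudometric d'.
  case: Hd => h1 h2 h3 h4; split => *; rewrite /d'; by [apply: h1|apply: h2|apply: h3|apply: h4].
have Hc' : consistent (restrict σ A') d'.
  move=> i U V; rewrite /prefers /restrict => H; apply: Hc; rewrite /prefers.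
  exact: index_pmap H.
have D0 : 0 <= D := @D_nonneg R _ f D HA' Hf.
have H := Hf (alts_in A') n HA' (restrict σ A') Hp' d' Hd' Hc' Xs.
apply: le_trans H _.
rewrite -mulrA; apply: ler_wpM2l => //.
Qed.
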